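(* Let $(X,x)$ be a pointed diffeological space and let $A$ be a $D$-open subset of $X$ containing $x$, equipped with the sub-diffeology of $X$. Then the inclusion $A\hookrightarrow X$ induces an isomorphism $\hat{T}_x(A)\cong\hat{T}_x(X)$.
   Context: A diffeological space is a set $X$ together with, for every open subset $U$ of every $\mathbb{R}^n$, a set of functions $U\to X$ called plots, such that constant maps are plots, the composite of a plot with a smooth map between open subsets of Euclidean spaces is a plot, and a function which is locally a plot is a plot; smooth maps send plots to plots. A subset of $X$ is $D$-open if its preimage under every plot is open; the sub-diffeology on a subset consists of maps whose composite with the inclusion is a plot. For a diffeological space $B$, $C^\infty(B,\mathbb{R})$ carries the functional diffeology (a map $U\to C^\infty(B,\mathbb{R})$ is a plot iff its adjoint $U\times B\to\mathbb{R}$ is smooth). $G_x(X)=\operatorname{colim}_B C^\infty(B,\mathbb{R})$ (colimit in diffeological spaces over $D$-open $B\ni x$ with sub-diffeology, along restrictions) is the diffeological algebra of germs at $x$. The external tangent space $\hat{T}_x(X)$ is the vector space of smooth linear maps $F:G_x(X)\to\mathbb{R}$ with $F([f][g])=F([f])g(x)+f(x)F([g])$. A smooth pointed map $h:(X,x)\to(Y,y)$ induces $h_*:\hat T_x(X)\to\hat T_y(Y)$, $h_*(F)([g])=F([g\circ h])$. *)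

(* Defs.v *)
From HB Require Import structures.
From mathcomp Require Import all_boot all_order all_algebra.
From mathcomp Require Import all_classical all_reals all_analysis.
From mathcomp Require Import Rstruct Rstruct_topology.

Unset Printing Implicit Defensive.
Import Order.TTheory GRing.Theory Num.Theory.
Import numFieldNormedType.Exports.
Local Open Scope classical_set_scope.
Local Open Scope ring_scope.

Section Diffeology.
Context {R : realType}.
Local Notation E n := 'rV[R]_n.

Fixpoint iderive {V W : normedModType R} (f : V -> W) (vs : seq V) : V -> W :=
  if vs is v :: vs' then (fun y => derive (iderive f vs') y v) else f.

Definition smooth_on {V W : normedModType R} (U : set V) (f : V -> W) : Prop :=
  forall (vs : seq V) (y : V), U y ->
    {for y, continuous (iderive f vs)} /\ (forall v, derivable (iderive f vs) y v).

(* A family of candidate plots: for each n, open U in R^n, maps U -> X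
   (represented by total functions; only the values on U matter). *)
Definition plots (X : Type) := forall n : nat, set (E n) -> (E n -> X) -> Prop.

Record is_diffeology {X : Type} (P : plots X) : Prop := {
  plot_open : forall n U p, P n U p -> open U;
  plot_ext : forall n U p q, P n U p -> (forall u, U u -> p u = q u) -> P n U q;
  plot_const : forall n (U : set (E n)) (c : X), open U -> P n U (fun _ => c);
  plot_comp : forall n m (U : set (E n)) (V : set (E m)) p (F : E m -> E n),
      P n U p -> open V -> smooth_on V F -> (forall v, V v -> U (F v)) ->
      P m V (p \o F);
  plot_local : forall n (U : set (E n)) p, open U ->
      (forall u, U u -> exists W : set (E n), [/\ open W, W u, W `<=` U & P n W p]) ->
      P n U p }.

Definition dsmooth {X Y : Type} (P : plots X) (Q : plots Y) (h : X -> Y) :=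
  forall n U p, P n U p -> Q n U (h \o p).

Definition Dopen {X : Type} (P : plots X) (A : set X) :=
  forall n U p, P n U p -> open (U `&` p @^-1` A).

Definition subplots {X : Type} (P : plots X) (A : set X) : plots {y : X | A y} :=
  fun n U p => P n U (fun u => proj1_sig (p u)).

Lemma incl_smooth {X : Type} (P : plots X) (A : set X) :
  dsmooth (subplots P A) P (@proj1_sig X A).
Proof. by []. Qed.

(* f restricted to B is smooth for the sub-diffeology of B
   (plots of B are plots of X landing in B) *)
Definition smooth_fun_on {X : Type} (P : plots X) (B : set X) (f : X -> R) :=
  forall n (U : set (E n)) p, P n U p -> (forall u, U u -> B (p u)) ->
    smooth_on U (f \o p).

(* plots of C^infty(B, R) with the functional diffeology *)
Definition cinf_plot {X : Type} (P : plots X) (B : set X) {n} (U : set (E n))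
    (Q : E n -> X -> R) :=
  [/\ open U, (forall u, U u -> smooth_fun_on P B (Q u)) &
   forall k (V : set (E k)) (q1 : E k -> E n) (q2 : E k -> X),
     open V -> smooth_on V q1 -> (forall v, V v -> U (q1 v)) ->
     P k V q2 -> (forall v, V v -> B (q2 v)) ->
     smooth_on V (fun v => Q (q1 v) (q2 v))].

(* germs at x: representatives (B, f), B D-open containing x, f smooth on B *)
Definition rep (X : Type) := (set X * (X -> R))%type.

Definition germ_valid {X : Type} (P : plots X) (x : X) (r : rep X) :=
  [/\ Dopen P r.1, r.1 x & smooth_fun_on P r.1 r.2].

Definition germ_eq {X : Type} (P : plots X) (x : X) (r s : rep X) :=
  exists W : set X, [/\ Dopen P W, W x, W `<=` r.1 `&` s.1 &
                      forall y, W y -> r.2 y = s.2 y].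

Definition gcls {X : Type} (P : plots X) (x : X) (r : rep X) : set (rep X) :=
  [set s | germ_valid P x s /\ germ_eq P x r s].

Record germ {X : Type} (P : plots X) (x : X) := Germ {
  gset :> set (rep X);
  gsetP : exists r, germ_valid P x r /\ gset = gcls P x r }.
Arguments gset {X P x}.
Arguments gsetP {X P x}.

Definition germ_of {X : Type} {P : plots X} {x : X} {r : rep X}
  (hr : germ_valid P x r) : germ P x := @Germ X P x (gcls P x r) (ex_intro _ r (conj hr erefl)).

Definition grepr {X : Type} {P : plots X} {x : X} (c : germ P x) : rep X :=
  proj1_sig (cid (gsetP c)).

Lemma grepr_valid {X : Type} {P : plots X} {x : X} (c : germ P x) :
  germ_valid P x (grepr c).
Proof. by rewrite /grepr; case: (cid (gsetP c)) => r [] /=. Qed.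

(* diffeology of G_x(X): the colimit (final) diffeology: locally, a plot
   factors as [_] o Q with Q a plot of some C^infty(B, R) *)
Definition germ_plots {X : Type} (P : plots X) (x : X) : plots (germ P x) :=
  fun n U G => open U /\ forall u, U u ->
    exists (W : set (E n)) (B : set X) (Q : E n -> X -> R),
      [/\ open W /\ W u, W `<=` U, Dopen P B /\ B x, cinf_plot P B W Q &
          forall w, W w -> gset (G w) (B, Q w)].

Definition rep_add {X : Type} (r s : rep X) : rep X :=
  (r.1 `&` s.1, fun y => r.2 y + s.2 y).
Definition rep_scale {X : Type} (k : R) (r : rep X) : rep X :=
  (r.1, fun y => k * r.2 y).
Definition rep_mul {X : Type} (r s : rep X) : rep X :=
  (r.1 `&` s.1, fun y => r.2 y * s.2 y).

(* external tangent vectors: smooth linear derivations G_x(X) -> R.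
   "c contains rep_add r s" with r in a, s in b expresses c = a + b, etc. *)
Definition ext_tangent {X : Type} (P : plots X) (x : X) (F : germ P x -> R) : Prop :=
  [/\ (forall n U G, germ_plots P x n U G -> smooth_on U (F \o G)),
      (forall (a b c : germ P x) r s, gset a r -> gset b s -> gset c (rep_add r s) ->
          F c = F a + F b),
      (forall k (a c : germ P x) r, gset a r -> gset c (rep_scale k r) -> F c = k * F a) &
      (forall (a b c : germ P x) r s, gset a r -> gset b s -> gset c (rep_mul r s) ->
          F c = F a * s.2 x + r.2 x * F b)].

Definition rep_pull {X Y : Type} (h : X -> Y) (r : rep Y) : rep X :=
  (h @^-1` r.1, r.2 \o h).

Lemma pull_valid {X Y : Type} {P : plots X} {Q : plots Y} {h : X -> Y}
  {x : X} {y : Y} (hh : dsmooth P Q h) (hx : h x = y) {r : rep Y} :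
  germ_valid Q y r -> germ_valid P x (rep_pull h r).
Proof.
case=> hO hy hs; split => /=.
- by move=> n U p Pp; exact: (hO n U (h \o p) (hh _ _ _ Pp)).
- by rewrite /preimage /= hx.
- by move=> n U p Pp hU; exact: (hs n U (h \o p) (hh _ _ _ Pp) hU).
Qed.

Definition germ_pull {X Y : Type} {P : plots X} {Q : plots Y} {h : X -> Y}
  {x : X} {y : Y} (hh : dsmooth P Q h) (hx : h x = y) (c : germ Q y) : germ P x :=
  germ_of (pull_valid hh hx (grepr_valid c)).

Definition tpush {X Y : Type} {P : plots X} {Q : plots Y} {h : X -> Y}
  {x : X} {y : Y} (hh : dsmooth P Q h) (hx : h x = y) (F : germ P x -> R) :
  germ Q y -> R := fun c => F (germ_pull hh hx c).

End Diffeology.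

(* Main.v *)
Require Import Defs.
From HB Require Import structures.
From mathcomp Require Import all_boot all_order all_algebra.
From mathcomp Require Import all_classical all_reals all_analysis.
From mathcomp Require Import Rstruct Rstruct_topology.
Import Order.TTheory GRing.Theory Num.Theory.
Import numFieldNormedType.Exports.
Local Open Scope classical_set_scope.
Local Open Scope ring_scope.

Arguments gset {R X P x}.
Arguments gsetP {R X P x}.
Section G.
Context {R : realType}.

Lemma Dopen_I {X : Type} (P : @plots R X) (A B : set X) :
  Dopen P A -> Dopen P B -> Dopen P (A `&` B).
Proof.
move=> hA hB n U p Pp.
have -> : U `&` p @^-1` (A `&` B) = (U `&` p @^-1` A) `&` (U `&` p @^-1` B).
  by apply/seteqP; split => u /=; tauto.
exact: openI (hA _ _ _ Pp) (hB _ _ _ Pp).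
Qed.

Lemma geq_refl {X : Type} {P : @plots R X} {x r} : germ_valid P x r -> germ_eq P x r r.
Proof. case=> h1 h2 _; exists r.1; split => //. Qed.

Lemma geq_sym {X : Type} {P : @plots R X} {x r s} : germ_eq P x r s -> germ_eq P x s r.
Proof.
case=> W [h1 h2 h3 h4]; exists W; split => //.
- by move=> y /h3 [? ?]; split.
- by move=> y /h4 ->.
Qed.

Lemma geq_trans {X : Type} {P : @plots R X} {x r s t} :
  germ_eq P x r s -> germ_eq P x s t -> germ_eq P x r t.
Proof.
case=> W [h1 h2 h3 h4] [W' [h1' h2' h3' h4']]; exists (W `&` W'); split.
- exact: Dopen_I.
- by [].
- by move=> y [/h3 [? _] /h3' [_ ?]].
- by move=> y [/[dup] /h4 -> _ /h4'].
Qed.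

Lemma gcls_eq {X : Type} (P : @plots R X) x r s :
  germ_eq P x r s -> gcls P x r = gcls P x s.
Proof.
move=> e; apply/seteqP; split => t [v e'] ; split => //.
- exact: geq_trans (geq_sym e) e'.
- exact: geq_trans e e'.
Qed.

Lemma gsetE {X : Type} (P : @plots R X) x (c : germ P x) : gset c = gcls P x (grepr c).
Proof. by rewrite /grepr; case: (cid (gsetP c)) => r [] /=. Qed.

Lemma gset_in {X : Type} {P : @plots R X} {x} {c : germ P x} {r} :
  gset c r -> germ_valid P x r /\ germ_eq P x (grepr c) r.
Proof. by rewrite gsetE. Qed.

Lemma germ_eqE {X : Type} (P : @plots R X) x (c d : germ P x) : gset c = gset d -> c = d.
Proof.
case: c => c hc; case: d => d hd /= e; subst d; congr Germ; exact: Prop_irrelevance.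
Qed.

Lemma germ_ext {X : Type} {P : @plots R X} {x} {c d : germ P x} {r} :
  gset c r -> gset d r -> c = d.
Proof.
move=> /gset_in [_ e1] /gset_in [_ e2]; apply: germ_eqE.
rewrite !gsetE; apply: gcls_eq; exact: geq_trans e1 (geq_sym e2).
Qed.

Lemma gset_of {X : Type} {P : @plots R X} {x r} (hr : germ_valid P x r) :
  gset (germ_of hr) r.
Proof. by split => //; exact: geq_refl. Qed.

Lemma Dopen_pull {X Y : Type} {P : @plots R X} {Q : @plots R Y} {h W} :
  dsmooth P Q h -> Dopen Q W -> Dopen P (h @^-1` W).
Proof. by move=> hh hW n U p Pp; exact: (hW n U (h \o p) (hh _ _ _ Pp)). Qed.

Lemma geq_pull {X Y : Type} {P : @plots R X} {Q : @plots R Y} {h x y r s} :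
  dsmooth P Q h -> h x = y -> germ_eq Q y r s ->
  germ_eq P x (rep_pull h r) (rep_pull h s).
Proof.
move=> hh hx [W [h1 h2 h3 h4]]; exists (h @^-1` W); split.
- exact: (Dopen_pull hh h1).
- by rewrite /preimage /= hx.
- by move=> z /h3.
- by move=> z /h4 /= ->.
Qed.

Lemma gset_pull {X Y : Type} {P : @plots R X} {Q : @plots R Y} {h x y}
  (hh : dsmooth P Q h) (hx : h x = y) {c : germ Q y} {r} :
  gset c r -> gset (germ_pull hh hx c) (rep_pull h r).
Proof.
move=> /gset_in [v e]; split.
- exact: (pull_valid hh hx v).
- exact: (geq_pull hh hx e).
Qed.
Lemma iderive_id {V : normedModType R} (vs : seq V) :
  iderive (@id V) vs = id \/ exists c : V, iderive (@id V) vs = fun _ => c.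
Proof.
elim: vs => [|v vs [IH|[c IH]]] /=; first by left.
- by right; exists v; apply/funext => y; rewrite IH derive_id.
- by right; exists 0; apply/funext => y; rewrite IH derive_cst.
Qed.
Lemma smooth_id {V : normedModType R} (U : set V) : smooth_on U (@id V).
Proof.
move=> vs y _; case: (iderive_id vs) => [->|[c ->]]; split.
- exact: cvg_id.
- by move=> v; exact: derivable_id.
- exact: cvg_cst.
- by move=> v; exact: derivable_cst.
Qed.
End G.

Section Incl.
Context {R : realType} {X : Type} (P : @plots R X) (HP : is_diffeology P)
  (A : set X) (HA : Dopen P A) (x : X) (hx : A x).

Local Notation SA := {y : X | A y}.
Local Notation PA := (subplots P A).
Local Notation xA := (exist A x hx).

Definition lift (y : X) : SA :=
  match pselect (A y) with left h => exist _ y h | right _ => xA end.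

Lemma liftE y (h : A y) : lift y = exist _ y h.
Proof.
rewrite /lift; case: pselect => [h'|//]; congr exist; exact: Prop_irrelevance.
Qed.

Lemma lift_proj (z : SA) : lift (proj1_sig z) = z.
Proof. by case: z => y h; rewrite liftE. Qed.

Definition ext_set (W : set SA) : set X := [set y | exists h : A y, W (exist _ y h)].
Definition ext_rep (r : @rep R SA) : @rep R X := (ext_set r.1, r.2 \o lift).

Lemma Dopen_ext W : Dopen PA W -> Dopen P (ext_set W).
Proof.
move=> hW n U p Pp.
have oV : open (U `&` p @^-1` A) := HA _ _ _ Pp.
have PV : P n (U `&` p @^-1` A) p.
  have := @plot_comp _ _ _ HP _ _ _ _ _ _ Pp oV (smooth_id _) (fun v (hv : (U `&` p @^-1` A) v) => hv.1).
  by [].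
have PAq : PA n (U `&` p @^-1` A) (lift \o p).
  apply: (@plot_ext _ _ _ HP _ _ _ _ PV) => u [_ hu] /=; by rewrite liftE.
have := hW _ _ _ PAq.
have -> : (U `&` p @^-1` A) `&` (lift \o p) @^-1` W = U `&` p @^-1` ext_set W.
  apply/seteqP; split => u /=.
  - by move=> [[hU hA]]; rewrite liftE => hw; split => //; exists hA.
  - by move=> [hU [hA hw]]; split; [split|rewrite liftE].
by [].
Qed.

Lemma smooth_fun_ext W g :
  smooth_fun_on PA W g -> smooth_fun_on P (ext_set W) (g \o lift).
Proof.
move=> hg n U p Pp hU.
have PAq : PA n U (lift \o p).
  apply: (@plot_ext _ _ _ HP _ _ _ _ Pp) => u /hU [h _] /=; by rewrite liftE.
apply: (hg _ _ _ PAq) => u /hU [h hw] /=; by rewrite liftE.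
Qed.

Lemma valid_ext r : germ_valid PA xA r -> germ_valid P x (ext_rep r).
Proof.
case=> h1 h2 h3; split.
- exact: Dopen_ext.
- by exists hx.
- exact: smooth_fun_ext.
Qed.

Lemma pull_ext r : rep_pull (@proj1_sig X A) (ext_rep r) = r.
Proof.
case: r => B g; rewrite /rep_pull /ext_rep /=; congr pair.
- apply/seteqP; split => -[y h] /=.
  + by case=> h' hb; have <- : h' = h by exact: Prop_irrelevance.
  + by move=> hb; exists h.
- by apply/funext => z /=; rewrite lift_proj.
Qed.

Lemma geq_ext r s : germ_eq PA xA r s -> germ_eq P x (ext_rep r) (ext_rep s).
Proof.
case=> W [h1 h2 h3 h4]; exists (ext_set W); split.
- exact: Dopen_ext.
- by exists hx.
- by move=> y [h /h3 [? ?]]; split; exists h.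
- by move=> y [h hw] /=; rewrite liftE; exact: h4.
Qed.

Lemma ext_pull r : germ_valid P x r ->
  germ_eq P x r (ext_rep (rep_pull (@proj1_sig X A) r)).
Proof.
case=> h1 h2 h3; exists (r.1 `&` A); split.
- exact: Dopen_I.
- by [].
- by move=> y [hr ha]; split => //; exists ha.
- by move=> y [hr ha] /=; rewrite liftE.
Qed.

Definition ext_germ (a : germ PA xA) : germ P x :=
  germ_of (valid_ext _ (grepr_valid a)).

Lemma gset_ext (a : germ PA xA) r : gset a r -> gset (ext_germ a) (ext_rep r).
Proof.
move=> /gset_in [v e]; split.
- exact: valid_ext.
- exact: geq_ext.
Qed.

Lemma ext_add r s : ext_rep (rep_add r s) = rep_add (ext_rep r) (ext_rep s).
Proof.
rewrite /ext_rep /rep_add /=; congr pair; apply/seteqP; split => y /=.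
- by case=> h [? ?]; split; exists h.
- case=> -[h ?] [h' ?]; exists h; split => //.
  by have -> : h = h' by exact: Prop_irrelevance.
Qed.

Lemma ext_mul r s : ext_rep (rep_mul r s) = rep_mul (ext_rep r) (ext_rep s).
Proof.
rewrite /ext_rep /rep_mul /=; congr pair; apply/seteqP; split => y /=.
- by case=> h [? ?]; split; exists h.
- case=> -[h ?] [h' ?]; exists h; split => //.
  by have -> : h = h' by exact: Prop_irrelevance.
Qed.

Lemma lift_x : lift x = xA.
Proof. exact: liftE. Qed.

Lemma gset_repr {Y : Type} {Q : @plots R Y} {y} (c : germ Q y) : gset c (grepr c).
Proof. rewrite gsetE; split; [exact: grepr_valid | exact: geq_refl (grepr_valid c)]. Qed.

Lemma plot_pull {Z Y : Type} {P0 : @plots R Z} {Q : @plots R Y} {h : Z -> Y} {z y}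
  (hh : dsmooth P0 Q h) (hxe : h z = y) n U G :
  germ_plots Q y n U G -> germ_plots P0 z n U (germ_pull hh hxe \o G).
Proof.
case=> oU hG; split => // u /hG [W [B [Qf [[oW Wu] WU [dB Bx] [oW' sQ cQ] hg]]]].
exists W, (h @^-1` B), (fun w z => Qf w (h z)); split => //.
- split; [exact: (Dopen_pull hh dB) | by rewrite /preimage /= hxe].
- split => //.
  + by move=> u' Wu' m V p Pp hp; exact: (sQ u' Wu' m V (h \o p) (hh _ _ _ Pp) hp).
  + by move=> k V q1 q2 oV s1 h1 Pq2 h2; exact: (cQ k V q1 (h \o q2) oV s1 h1 (hh _ _ _ Pq2) h2).
- by move=> w Ww; exact: (gset_pull hh hxe (hg w Ww)).
Qed.

Lemma plot_ext' n U G :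
  germ_plots PA xA n U G -> germ_plots P x n U (ext_germ \o G).
Proof.
case=> oU hG; split => // u /hG [W [B [Qf [[oW Wu] WU [dB Bx] [oW' sQ cQ] hg]]]].
exists W, (ext_set B), (fun w y => Qf w (lift y)); split => //.
- split; [exact: Dopen_ext | by exists hx].
- split => //.
  + by move=> u' Wu'; exact: (smooth_fun_ext _ _ (sQ u' Wu')).
  + move=> k V q1 q2 oV s1 h1 Pq2 h2.
    have PAq : PA k V (lift \o q2).
      apply: (@plot_ext _ _ _ HP _ _ _ _ Pq2) => v /h2 [hh _] /=; by rewrite liftE.
    apply: (cQ k V q1 (lift \o q2) oV s1 h1 PAq) => v /h2 [hh hw] /=; by rewrite liftE.
- by move=> w Ww; exact: (gset_ext _ _ (hg w Ww)).
Qed.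

Lemma main_incl :
  let push := tpush (incl_smooth P A) (erefl : proj1_sig xA = x) in
  [/\ (forall F, ext_tangent PA xA F -> ext_tangent P x (push F)),
      (forall (k1 k2 : R) F1 F2,
          push (fun c => k1 * F1 c + k2 * F2 c) =
          (fun c => k1 * push F1 c + k2 * push F2 c)),
      (forall F1 F2, ext_tangent PA xA F1 -> ext_tangent PA xA F2 ->
          push F1 = push F2 -> F1 = F2) &
      (forall F', ext_tangent P x F' -> exists F, ext_tangent PA xA F /\ push F = F')].
Proof.
move=> push.
set hh := incl_smooth P A.
set hxe := (erefl : proj1_sig xA = x).
have pe : forall a : germ PA xA, germ_pull hh hxe (ext_germ a) = a.
  move=> a; apply: (germ_ext _ (gset_repr a)).
  have := gset_pull hh hxe (gset_ext _ _ (gset_repr a)).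
  by rewrite pull_ext.
have ep : forall c : germ P x, ext_germ (germ_pull hh hxe c) = c.
  move=> c; apply: (germ_ext (gset_ext _ _ (gset_pull hh hxe (gset_repr c)))).
  rewrite gsetE; split; last exact: ext_pull (grepr_valid c).
  exact: valid_ext (pull_valid hh hxe (grepr_valid c)).
split.
- move=> F [Fs Fa Fsc Fm]; split.
  + move=> n U G hG; exact (Fs _ _ _ (plot_pull hh hxe _ _ _ hG)).
  + move=> a b c r s ha hb hc; rewrite /push /tpush.
    exact: (Fa _ _ _ _ _ (gset_pull hh hxe ha) (gset_pull hh hxe hb) (gset_pull hh hxe hc)).
  + move=> k a c r ha hc; rewrite /push /tpush.
    exact: (Fsc k _ _ _ (gset_pull hh hxe ha) (gset_pull hh hxe hc)).
  + move=> a b c r s ha hb hc; rewrite /push /tpush.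
    exact: (Fm _ _ _ _ _ (gset_pull hh hxe ha) (gset_pull hh hxe hb) (gset_pull hh hxe hc)).
- by [].
- move=> F1 F2 _ _ e; apply/funext => a.
  rewrite -[a]pe; exact: (congr1 (fun f => f (ext_germ a)) e).
- move=> F' [Fs Fa Fsc Fm]; exists (F' \o ext_germ); split; last first.
    by apply/funext => c; rewrite /push /tpush /= ep.
  split.
  + move=> n U G hG; exact: (Fs _ _ _ (plot_ext' _ _ _ hG)).
  + move=> a b c r s ha hb hc /=.
    have hc' := gset_ext _ _ hc; rewrite ext_add in hc'.
    exact: (Fa _ _ _ _ _ (gset_ext _ _ ha) (gset_ext _ _ hb) hc').
  + move=> k a c r ha hc /=.
    exact: (Fsc k _ _ _ (gset_ext _ _ ha) (gset_ext _ _ hc)).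
  + move=> a b c r s ha hb hc /=.
    have hc' := gset_ext _ _ hc; rewrite ext_mul in hc'.
    have := Fm _ _ _ _ _ (gset_ext _ _ ha) (gset_ext _ _ hb) hc'.
    by rewrite /= lift_x.
Qed.

End Incl.

Theorem proposition3p12 (X : Type) (P : @plots Rdefinitions.R X) (x : X)
  (A : set X) (HP : is_diffeology P) (HA : Dopen P A) (hx : A x) :
  let PA := subplots P A in
  let xA : {y : X | A y} := exist _ x hx in
  let push := tpush (incl_smooth P A) (erefl : proj1_sig xA = x) in
  [/\ (forall F, ext_tangent PA xA F -> ext_tangent P x (push F)),
      (forall (k1 k2 : Rdefinitions.R) F1 F2,
          push (fun c => k1 * F1 c + k2 * F2 c) =
          (fun c => k1 * push F1 c + k2 * push F2 c)),
      (forall F1 F2, ext_tangent PA xA F1 -> ext_tangent PA xA F2 ->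
          push F1 = push F2 -> F1 = F2) &
      (forall F', ext_tangent P x F' -> exists F, ext_tangent PA xA F /\ push F = F')].
Proof. exact: (@main_incl _ X P HP A HA x hx). Qed.
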